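(* Let $T$ be a set of basic terms, $\kappa$ a time variable, and $\Delta$ the saturation of the sample set $\{t[\kappa]\mid t\in T\}$. Then for any assignment (homomorphism) $h$ from the term algebra to $\mathbf{W}$ and any $n\in\omega^+$, there exists a $\Delta$-diagram $\delta$ such that $\delta(\kappa)=n$ and $\delta(t[\kappa])=[\![t]\!]_h(n)$ for all $t\in T$.
   Context: Time warps: join-preserving maps $f\colon\omega^+\to\omega^+$, $\omega^+=\omega\cup\{\omega\}$, ordered pointwise. $\mathbf{W}=\langle W,\wedge,\vee,\circ,{}^\star,\mathrm{id}\rangle$: pointwise meet/join, composition, identity, and $f^\star$ = largest time warp $h$ with $f\circ h\le p$, where $p(m)=\bigvee\{k\in\omega\mid k<m\}$. Terms are built from variables with $\wedge,\vee,\cdot,{}',1$; basic terms use only variables, $\cdot,{}',1$; $[\![t]\!]_h$ is the value of $t$ in $\mathbf{W}$ under $h$. Samples (formal expressions): $\alpha::=\kappa\mid t[\alpha]\mid \mathrm{suc}(\alpha)\mid\mathrm{last}(t)$ with $\kappa$ a time variable and $t$ a basic term. The relation $\leadsto$ on samples: $t[\alpha]\leadsto\alpha$, $\mathrm{suc}(\alpha)\leadsto\alpha$, $t[\alpha]\leadsto t[\mathrm{last}(t)]$, $(tu)[\alpha]\leadsto t[u[\alpha]]$, $t'[\alpha]\leadsto t[t'[\alpha]]$, $t'[\alpha]\leadsto t[\mathrm{suc}(t'[\alpha])]$. The saturation of a sample set is its closure under $\leadsto$; a set is saturated if closed under $\leadsto$. $S(n)=n+1$ for $n\in\omega$, $S(\omega)=\omega$.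 For saturated $\Delta$, a $\Delta$-diagram is $\delta\colon\Delta\to\omega^+$ such that, whenever the samples mentioned belong to $\Delta$: (1) $\delta(\alpha)\le\delta(\beta)\Rightarrow\delta(t[\alpha])\le\delta(t[\beta])$; (2) $\delta(\alpha)=0\Rightarrow\delta(t[\alpha])=0$; (3) $\delta(\mathrm{suc}(\alpha))=S(\delta(\alpha))$; (4) for $t[\alpha]\in\Delta$: $\delta(\mathrm{last}(t))\le\delta(\alpha)\iff\delta(t[\mathrm{last}(t)])=\delta(t[\alpha])$; (5) $\delta(\mathrm{last}(t))=\omega\Rightarrow\delta(t[\mathrm{last}(t)])=\omega$; (6) $\delta(1[\alpha])=\delta(\alpha)$; (7) $\delta(\mathrm{last}(1))=\omega$; (8) $\delta((tu)[\alpha])=\delta(t[u[\alpha]])$; (9) $\delta(\mathrm{last}(tu))=\omega\Rightarrow\delta(\mathrm{last}(t))=\delta(\mathrm{last}(u))=\omega$; (10) for $t'[\alpha]\in\Delta$: $0<\delta(\alpha)<\omega\Rightarrow\delta(t[t'[\alpha]])<\delta(\alpha)$; (11) for $t'[\alpha]\in\Delta$: $\delta(t'[\alpha])<\omega\Rightarrow\delta(\alpha)\le\delta(t[\mathrm{suc}(t'[\alpha])])$; (12) $\delta(\mathrm{last}(t'))=\omega\Rightarrow\delta(\mathrm{last}(t))=\omega$. *)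

(* Defs.v *)
From Stdlib Require Import Arith Relations ClassicalEpsilon.

Inductive omp : Type := fin : nat -> omp | om : omp.

Definition ole (x y : omp) : Prop :=
  match x, y with
  | _, om => True
  | om, fin _ => False
  | fin a, fin b => a <= b
  end.

Definition omin (x y : omp) : omp :=
  match x, y with
  | om, y => y
  | x, om => x
  | fin a, fin b => fin (Nat.min a b)
  end.

Definition omax (x y : omp) : omp :=
  match x, y with
  | om, _ => om
  | _, om => om
  | fin a, fin b => fin (Nat.max a b)
  end.

Definition Ssucc (x : omp) : omp :=
  match x with fin n => fin (S n) | om => om end.

Definition is_ub (A : omp -> Prop) (x : omp) : Prop := forall y, A y -> ole y x.
Definition is_lub (A : omp -> Prop) (x : omp) : Prop :=
  is_ub A x /\ forall z, is_ub A z -> ole x z.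

Definition time_warp (f : omp -> omp) : Prop :=
  forall (A : omp -> Prop) (x : omp),
    is_lub A x -> is_lub (fun y => exists z, A z /\ y = f z) (f x).

Definition fle (f g : omp -> omp) : Prop := forall x, ole (f x) (g x).

(* p(m) = sup { k in omega | k < m } *)
Definition pw (m : omp) : omp :=
  match m with fin n => fin (Nat.pred n) | om => om end.

Definition star (f : omp -> omp) : omp -> omp :=
  epsilon (inhabits (fun x : omp => x))
    (fun g => time_warp g /\ fle (fun x => f (g x)) pw /\
       forall g', time_warp g' -> fle (fun x => f (g' x)) pw -> fle g' g).

Inductive term : Type :=
| tvar : nat -> term
| tmeet : term -> term -> term
| tjoin : term -> term -> term
| tmul : term -> term -> term
| tstar : term -> term
| tone : term.

Fixpoint eval (h : nat -> omp -> omp) (t : term) : omp -> omp :=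
  match t with
  | tvar v => h v
  | tmeet a b => fun x => omin (eval h a x) (eval h b x)
  | tjoin a b => fun x => omax (eval h a x) (eval h b x)
  | tmul a b => fun x => eval h a (eval h b x)
  | tstar a => star (eval h a)
  | tone => fun x => x
  end.

Inductive bterm : Type :=
| bvar : nat -> bterm
| bmul : bterm -> bterm -> bterm
| bstar : bterm -> bterm
| bone : bterm.

Fixpoint bterm_to_term (t : bterm) : term :=
  match t with
  | bvar v => tvar v
  | bmul a b => tmul (bterm_to_term a) (bterm_to_term b)
  | bstar a => tstar (bterm_to_term a)
  | bone => tone
  end.

Inductive sample : Type :=
| skappa : nat -> sample
| sapp : bterm -> sample -> sample
| ssuc : sample -> sample
| slast : bterm -> sample.

Inductive step : sample -> sample -> Prop :=
| st_app : forall t a, step (sapp t a) a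
| st_suc : forall a, step (ssuc a) a
| st_last : forall t a, step (sapp t a) (sapp t (slast t))
| st_mul : forall t u a, step (sapp (bmul t u) a) (sapp t (sapp u a))
| st_star1 : forall t a, step (sapp (bstar t) a) (sapp t (sapp (bstar t) a))
| st_star2 : forall t a, step (sapp (bstar t) a) (sapp t (ssuc (sapp (bstar t) a))).

Definition saturation (A : sample -> Prop) (b : sample) : Prop :=
  exists a, A a /\ clos_refl_trans sample step a b.

Definition zero : omp := fin 0.

Definition diagram (D : sample -> Prop) (d : sample -> omp) : Prop :=
  (forall t a b, D a -> D b -> D (sapp t a) -> D (sapp t b) ->
     ole (d a) (d b) -> ole (d (sapp t a)) (d (sapp t b))) /\
  (forall t a, D a -> D (sapp t a) -> d a = zero -> d (sapp t a) = zero) /\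
  (forall a, D a -> D (ssuc a) -> d (ssuc a) = Ssucc (d a)) /\
  (forall t a, D (sapp t a) -> D a -> D (slast t) -> D (sapp t (slast t)) ->
     (ole (d (slast t)) (d a) <-> d (sapp t (slast t)) = d (sapp t a))) /\
  (forall t, D (slast t) -> D (sapp t (slast t)) ->
     d (slast t) = om -> d (sapp t (slast t)) = om) /\
  (forall a, D a -> D (sapp bone a) -> d (sapp bone a) = d a) /\
  (D (slast bone) -> d (slast bone) = om) /\
  (forall t u a, D (sapp (bmul t u) a) -> D (sapp t (sapp u a)) ->
     d (sapp (bmul t u) a) = d (sapp t (sapp u a))) /\
  (forall t u, D (slast (bmul t u)) -> D (slast t) -> D (slast u) ->
     d (slast (bmul t u)) = om -> d (slast t) = om /\ d (slast u) = om) /\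
  (forall t a, D (sapp (bstar t) a) -> D a -> D (sapp t (sapp (bstar t) a)) ->
     ole (fin 1) (d a) -> d a <> om ->
     ole (Ssucc (d (sapp t (sapp (bstar t) a)))) (d a)) /\
  (forall t a, D (sapp (bstar t) a) -> D a ->
     D (sapp t (ssuc (sapp (bstar t) a))) ->
     d (sapp (bstar t) a) <> om ->
     ole (d a) (d (sapp t (ssuc (sapp (bstar t) a))))) /\
  (forall t, D (slast (bstar t)) -> D (slast t) ->
     d (slast (bstar t)) = om -> d (slast t) = om).

(* Main.v *)
Require Import Defs.
From Stdlib Require Import Arith Lia Classical ClassicalEpsilon Relations FunctionalExtensionality.

Lemma ole_refl x : ole x x.
Proof. destruct x; simpl; auto. Qed.
Lemma ole_trans x y z : ole x y -> ole y z -> ole x z.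
Proof. destruct x, y, z; simpl; intuition lia. Qed.
Lemma ole_antisym x y : ole x y -> ole y x -> x = y.
Proof. destruct x, y; simpl; intros; try contradiction; try reflexivity. f_equal; lia. Qed.
Lemma ole_om x : ole x om.
Proof. destruct x; exact I. Qed.
Lemma om_ole x : ole om x -> x = om.
Proof. destruct x; simpl; tauto. Qed.
Lemma ole_zero x : ole zero x.
Proof. destruct x; simpl; auto; lia. Qed.
Lemma nole_fin a m : ~ ole a (fin m) -> ole (fin (S m)) a.
Proof. destruct a; simpl; intros; auto; lia. Qed.

Lemma is_lub_ext (A B : omp -> Prop) x : (forall y, A y <-> B y) -> is_lub A x -> is_lub B x.
Proof.
  intros E [H1 H2]; split.
  - intros y By. apply H1, E, By.
  - intros z Hz. apply H2. intros y Ay. apply Hz, E, Ay.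
Qed.

Lemma least_ex (P : nat -> Prop) : (exists k, P k) -> exists k, P k /\ forall j, P j -> k <= j.
Proof.
  intros [k Hk]. revert Hk. pattern k. apply lt_wf_ind. clear k. intros k IH Hk.
  destruct (classic (exists j, j < k /\ P j)) as [[j [Hj Pj]]|Hn].
  - apply (IH j Hj Pj).
  - exists k. split; auto. intros j Pj. destruct (le_lt_dec k j); auto.
    exfalso; apply Hn; eauto.
Qed.

Lemma lub_ex (A : omp -> Prop) : exists x, is_lub A x.
Proof.
  destruct (classic (exists b, is_ub A (fin b))) as [Hb|Hb].
  - apply least_ex in Hb. destruct Hb as [b [Hb Hmin]]. exists (fin b). split; auto.
    intros z Hz. destruct z as [c|]; [|exact I]. simpl. apply Hmin, Hz.
  - exists om. split. intros y _; apply ole_om.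
    intros z Hz. destruct z as [c|]; [|exact I]. exfalso; apply Hb; eauto.
Qed.

Definition Lub (A : omp -> Prop) : omp := epsilon (inhabits zero) (is_lub A).
Lemma Lub_spec A : is_lub A (Lub A).
Proof. unfold Lub. apply epsilon_spec, lub_ex. Qed.

Definition TW (f : omp -> omp) : Prop :=
  (forall x y, ole x y -> ole (f x) (f y)) /\ f zero = zero /\
  is_lub (fun y => exists k, y = f (fin k)) (f om).

Lemma fin_lub_om : is_lub (fun y => exists k, y = fin k) om.
Proof.
  split. intros y _. apply ole_om.
  intros z Hz. destruct z as [c|]; [|exact I].
  specialize (Hz (fin (S c)) (ex_intro _ _ eq_refl)). simpl in Hz; lia.
Qed.

Lemma tw_TW f : time_warp f -> TW f.
Proof.
  intros Hf. split; [|split].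
  - intros x y Hxy.
    assert (H: is_lub (fun z => z = x \/ z = y) y).
    { split. intros z [-> | ->]; auto using ole_refl. intros z Hz. apply Hz; auto. }
    apply Hf in H. destruct H as [Hub _]. apply Hub. exists x; auto.
  - assert (H: is_lub (fun _ => False) zero).
    { split. intros y []. intros z _; apply ole_zero. }
    apply Hf in H. destruct H as [_ Hl]. apply ole_antisym.
    + apply Hl. intros y [z [[] _]].
    + apply ole_zero.
  - pose proof (Hf _ _ fin_lub_om) as H. eapply is_lub_ext; [|exact H].
    intros y; split.
    + intros [z [[k ->] ->]]; eauto.
    + intros [k ->]. exists (fin k); eauto.
Qed.

Lemma TW_tw f : TW f -> time_warp f.
Proof.
  intros [Hm [H0 Hl]] A x [Hub Hleast]. split.
  - intros y [z [Hz ->]]. apply Hm, Hub, Hz.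
  - intros z Hz. destruct (classic (A x)) as [Ax|nAx].
    { apply Hz. exists x; auto. }
    destruct x as [[|j]|].
    + change (fin 0) with zero. rewrite H0. apply ole_zero.
    + exfalso. assert (H: ole (fin (S j)) (fin j)).
      { apply Hleast. intros y Ay. pose proof (Hub y Ay) as Hy.
        destruct y as [c|]; simpl in *; [|contradiction].
        assert (c <> S j) by (intro; subst; contradiction). lia. }
      simpl in H; lia.
    + destruct Hl as [_ Hl2]. apply Hl2. intros y [k ->].
      destruct (classic (exists a, A a /\ ole (fin k) a)) as [[a [Aa Hka]]|Hn].
      * apply ole_trans with (f a). apply Hm; auto. apply Hz. exists a; auto.
      * exfalso. assert (H: ole om (fin k)).
        { apply Hleast. intros y Ay. destruct y as [c|].
          - simpl. destruct (le_lt_dec k c) as [Hkc|Hkc]; [|lia].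
            exfalso; apply Hn. exists (fin c); split; auto.
          - exfalso; apply Hn. exists om; split; auto. exact I. }
        exact H.
Qed.

Lemma TW_id : TW (fun x => x).
Proof. split; [|split]; auto. apply fin_lub_om. Qed.

Lemma TW_comp f g : TW f -> TW g -> TW (fun x => f (g x)).
Proof.
  intros Hf Hg. pose proof (TW_tw f Hf) as Hf'.
  destruct Hf as [Hfm [Hf0 Hfl]]. destruct Hg as [Hgm [Hg0 Hgl]].
  split; [|split].
  - intros x y H. apply Hfm, Hgm, H.
  - rewrite Hg0; exact Hf0.
  - apply Hf' in Hgl. eapply is_lub_ext; [|exact Hgl]. intros y; split.
    + intros [z [[k ->] ->]]; eauto.
    + intros [k ->]. exists (g (fin k)); eauto.
Qed.

Definition Mspec (f : omp -> omp) m y :=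
  ole (f y) (fin m) /\ forall z, ole (f z) (fin m) -> ole z y.

Lemma M_ex f m : TW f -> exists y, Mspec f m y.
Proof.
  intros [Hm [H0 Hl]].
  destruct (classic (ole (f om) (fin m))) as [Hom|Hom].
  { exists om. split; auto. intros; apply ole_om. }
  assert (Hex: exists k, ~ ole (f (fin k)) (fin m)).
  { apply NNPP. intro Hn. apply Hom. apply Hl. intros y [k ->].
    apply NNPP. intro H. apply Hn. eauto. }
  apply least_ex in Hex. destruct Hex as [k0 [Hk0 Hmin]].
  destruct k0 as [|k].
  { exfalso. apply Hk0. change (fin 0) with zero. rewrite H0. apply ole_zero. }
  exists (fin k). split.
  - apply NNPP. intro H. specialize (Hmin k H). lia.
  - intros z Hz. destruct z as [j|].
    + simpl. destruct (le_lt_dec j k); auto. exfalso. apply Hk0.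
      apply ole_trans with (f (fin j)); auto; apply Hm; simpl; lia.
    + exfalso. apply Hk0. apply ole_trans with (f om); auto; apply Hm, ole_om.
Qed.

Definition M f m := epsilon (inhabits zero) (Mspec f m).
Lemma M_spec f m : TW f -> Mspec f m (M f m).
Proof. intros H. unfold M. apply epsilon_spec, M_ex, H. Qed.

Definition Gfin f k := match k with 0 => zero | S m => M f m end.
Definition G f x := match x with fin k => Gfin f k | om => Lub (fun y => exists k, y = Gfin f k) end.

Lemma Gfin_mono f : TW f -> forall k k', k <= k' -> ole (Gfin f k) (Gfin f k').
Proof.
  intros Hf k k' Hk. destruct k; [apply ole_zero|]. destruct k'; [lia|]. simpl.
  destruct (M_spec f k Hf) as [H1 _]. destruct (M_spec f k' Hf) as [_ H2].
  apply H2. apply ole_trans with (fin k); auto. simpl; lia.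
Qed.

Lemma G_TW f : TW f -> TW (G f).
Proof.
  intros Hf. split; [|split].
  - intros x y H. destruct x as [k|], y as [k'|]; simpl in *.
    + apply Gfin_mono; auto.
    + apply (proj1 (Lub_spec _)). eauto.
    + contradiction.
    + apply ole_refl.
  - reflexivity.
  - exact (Lub_spec _).
Qed.

Lemma G_below f : TW f -> fle (fun x => f (G f x)) pw.
Proof.
  intros Hf x. destruct x as [[|m]|]; simpl.
  - destruct Hf as [_ [H0 _]]. change (fin 0) with zero. rewrite H0. apply ole_refl.
  - apply (M_spec f m Hf).
  - apply ole_om.
Qed.

Lemma G_max f g : TW f -> TW g -> fle (fun x => f (g x)) pw -> fle g (G f).
Proof.
  intros Hf Hg Hfg.
  assert (Hfin: forall k, ole (g (fin k)) (G f (fin k))).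
  { intros [|m]; simpl.
    - destruct Hg as [_ [H0 _]]. change (fin 0) with zero. rewrite H0. apply ole_refl.
    - apply (M_spec f m Hf). apply (Hfg (fin (S m))). }
  intros x. destruct x as [k|]; auto.
  destruct Hg as [_ [_ [_ Hl]]]. apply Hl. intros y [k ->].
  apply ole_trans with (G f (fin k)); auto. apply (proj1 (G_TW f Hf)), ole_om.
Qed.

Lemma star_G f : TW f -> star f = G f.
Proof.
  intros Hf. unfold star.
  set (P := fun g => time_warp g /\ fle (fun x => f (g x)) pw /\
       forall g', time_warp g' -> fle (fun x => f (g' x)) pw -> fle g' g).
  assert (HP: P (G f)).
  { split; [|split]. apply TW_tw, G_TW, Hf. apply G_below, Hf.
    intros g' Hg' Hfg'. apply G_max; auto. apply tw_TW, Hg'. }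
  destruct (epsilon_spec (inhabits (fun x : omp => x)) P (ex_intro _ _ HP)) as [Htw [Hle Hmax]].
  extensionality x. apply ole_antisym.
  - apply HP; auto.
  - apply Hmax; auto. apply HP. apply HP.
Qed.

Definition E h t := eval h (bterm_to_term t).

Lemma E_TW h (hW : forall v, time_warp (h v)) t : TW (E h t).
Proof.
  unfold E. induction t; simpl.
  - apply tw_TW, hW.
  - apply TW_comp; auto.
  - rewrite star_G; auto. apply G_TW; auto.
  - apply TW_id.
Qed.

Definition Lspec (f : omp -> omp) l := forall x, ole l x <-> f x = f om.

Lemma L_ex f : TW f -> exists l, Lspec f l.
Proof.
  intros [Hm _].
  destruct (classic (exists k, f (fin k) = f om)) as [Hex|Hn].
  - apply least_ex in Hex. destruct Hex as [k [Hk Hmin]]. exists (fin k). intros x; split.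
    + intros H. apply ole_antisym. apply Hm, ole_om. rewrite <- Hk. apply Hm, H.
    + intros H. destruct x as [j|]; [|exact I]. simpl. apply Hmin, H.
  - exists om. intros x; split.
    + intros H. apply om_ole in H. subst; reflexivity.
    + intros H. destruct x as [j|]; [|exact I]. exfalso; eauto.
Qed.

Definition L f := epsilon (inhabits zero) (Lspec f).
Lemma L_spec f : TW f -> Lspec f (L f).
Proof. intros H. unfold L. apply epsilon_spec, L_ex, H. Qed.

Lemma L_om_f f : TW f -> Lspec f om -> f om = om.
Proof.
  intros [Hm [H0 [Hub Hl]]] HL. destruct (f om) as [v|] eqn:Ev; auto. exfalso.
  assert (Hne: forall k, f (fin k) <> fin v).
  { intros k Hk. rewrite <- Ev in Hk. apply HL in Hk. exact Hk. }
  destruct v as [|v].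
  - apply (Hne 0). change (fin 0) with zero. rewrite H0. reflexivity.
  - assert (H: ole (fin (S v)) (fin v)).
    { apply Hl. intros y [k ->]. pose proof (Hub _ (ex_intro _ k eq_refl)) as Hk.
      specialize (Hne k). destruct (f (fin k)) as [c|]; simpl in *; [|contradiction].
      assert (c <> S v) by congruence. lia. }
    simpl in H; lia.
Qed.

Lemma C4 f x : TW f -> (ole (L f) x <-> f (L f) = f x).
Proof.
  intros Hf. pose proof (L_spec f Hf) as HL.
  assert (E1: f (L f) = f om) by (apply HL, ole_refl). rewrite E1.
  split; intro H; [symmetry; apply HL; auto| apply HL; auto].
Qed.

Lemma C5 f : TW f -> L f = om -> f (L f) = om.
Proof.
  intros Hf H. pose proof (L_spec f Hf) as HL. rewrite H in *. apply L_om_f; auto.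
Qed.

Lemma C7 : L (fun x => x) = om.
Proof.
  pose proof (L_spec _ TW_id) as HL. apply (HL (L (fun x => x))). apply ole_refl.
Qed.

Lemma C9 f g : TW f -> TW g -> L (fun x => f (g x)) = om -> L f = om /\ L g = om.
Proof.
  intros Hf Hg H. pose proof (L_spec _ (TW_comp f g Hf Hg)) as HLfg. rewrite H in HLfg.
  pose proof (L_spec f Hf) as HLf. pose proof (L_spec g Hg) as HLg.
  assert (Lg: L g = om).
  { destruct (L g) as [k|] eqn:Ek; auto. exfalso.
    assert (H1: g (fin k) = g om) by (apply HLg; try rewrite Ek; apply ole_refl).
    assert (H2: ole om (fin k)) by (apply HLfg; rewrite H1; reflexivity). exact H2. }
  split; auto.
  assert (gom: g om = om) by (apply L_om_f; auto; rewrite <- Lg; exact HLg).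
  assert (fgom: f (g om) = om) by (apply (L_om_f _ (TW_comp f g Hf Hg)); auto).
  rewrite gom in fgom.
  destruct (L f) as [k|] eqn:Ek; auto. exfalso.
  assert (H1: f (fin k) = f om) by (apply HLf; try rewrite Ek; apply ole_refl).
  destruct (classic (exists m, ole (fin k) (g (fin m)))) as [[m Hm]|Hn].
  - assert (H3: f (g (fin m)) = om).
    { apply om_ole. rewrite <- fgom, <- H1. apply Hf, Hm. }
    assert (H4: ole om (fin m)). { apply HLfg. rewrite H3, gom, fgom. reflexivity. }
    exact H4.
  - destruct Hg as [_ [_ [_ Hl]]].
    assert (H5: ole (g om) (fin k)).
    { apply Hl. intros y [m ->]. apply NNPP; intro H6. apply Hn. exists m.
      destruct (g (fin m)) as [c|]; simpl in *; lia || exact I. }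
    rewrite gom in H5. exact H5.
Qed.

Lemma C10 f x : TW f -> ole (fin 1) x -> x <> om -> ole (Ssucc (f (star f x))) x.
Proof.
  intros Hf H1 H2. rewrite star_G; auto.
  destruct x as [[|m]|]; simpl in *; try lia; try congruence.
  destruct (M_spec f m Hf) as [H _]. destruct (f (M f m)); simpl in *; lia.
Qed.

Lemma C11 f x : TW f -> star f x <> om -> ole x (f (Ssucc (star f x))).
Proof.
  intros Hf H. rewrite star_G in *; auto.
  destruct x as [[|m]|]; simpl in *.
  - apply ole_zero.
  - destruct (M f m) as [j|] eqn:Ej; [|congruence]. simpl.
    apply nole_fin. intro H3. destruct (M_spec f m Hf) as [_ Hmax].
    specialize (Hmax _ H3). rewrite Ej in Hmax. simpl in Hmax; lia.
  - destruct (Lub (fun y : omp => exists k : nat, y = Gfin f k)) as [v|] eqn:Ev; [|congruence].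
    simpl. destruct (f (fin (S v))) as [w|] eqn:Ew; [|exact I]. exfalso.
    destruct (M_spec f w Hf) as [_ Hmax].
    assert (H4: ole (fin (S v)) (M f w)) by (apply Hmax; rewrite Ew; apply ole_refl).
    assert (H5: ole (M f w) (fin v)).
    { rewrite <- Ev. apply (proj1 (Lub_spec _)). exists (S w). reflexivity. }
    pose proof (ole_trans _ _ _ H4 H5) as H6. simpl in H6; lia.
Qed.

Lemma C12 f : TW f -> L (star f) = om -> L f = om.
Proof.
  intros Hf H. rewrite star_G in H; auto.
  pose proof (G_TW f Hf) as HG.
  pose proof (L_spec _ HG) as HLg. rewrite H in HLg.
  pose proof (L_om_f _ HG HLg) as Gom.
  pose proof (L_spec f Hf) as HLf.
  destruct (L f) as [k|] eqn:Ek; auto. exfalso.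
  assert (H1: f (fin k) = f om) by (apply HLf; try rewrite Ek; apply ole_refl).
  destruct (f om) as [w|] eqn:Ew.
  - destruct (M_spec f w Hf) as [_ Hmax].
    assert (H2: ole om (M f w)) by (apply Hmax; rewrite Ew; apply ole_refl).
    apply om_ole in H2.
    assert (H3: ole om (fin (S w))). { apply HLg. change (M f w = G f om). rewrite H2, Gom. reflexivity. }
    exact H3.
  - assert (H4: ole (G f om) (fin k)).
    { simpl. apply (proj2 (Lub_spec _)). intros y [m ->]. destruct m as [|m]; [apply ole_zero|].
      simpl. destruct (M_spec f m Hf) as [Hm _].
      apply NNPP; intro H5. apply nole_fin in H5.
      destruct (M f m) as [c|] eqn:Ec.
      - simpl in H5. assert (H6: ole (f (fin k)) (f (fin c))) by (apply Hf; simpl; lia).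
        try rewrite H1 in H6; try rewrite Ec in Hm; exact (ole_trans _ _ _ H6 Hm).
      - try rewrite Ec in Hm; try rewrite Ew in Hm; exact Hm. }
    rewrite Gom in H4. exact H4.
Qed.

Fixpoint dd h n (s : sample) : omp :=
  match s with
  | skappa _ => n
  | sapp t a => E h t (dd h n a)
  | ssuc a => Ssucc (dd h n a)
  | slast t => L (E h t)
  end.

Theorem proposition3p3 (T : bterm -> Prop) (kappa : nat)
  (h : nat -> omp -> omp) (hW : forall v, time_warp (h v)) (n : omp) :
  exists d : sample -> omp,
    diagram (saturation (fun s => exists t, T t /\ s = sapp t (skappa kappa))) d /\
    d (skappa kappa) = n /\
    (forall t, T t -> d (sapp t (skappa kappa)) = eval h (bterm_to_term t) n).
Proof.
  exists (dd h n). split; [|split; [reflexivity|intros; reflexivity]].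
  pose proof (E_TW h hW) as ET.
  unfold diagram. repeat split; intros; simpl in *.
  - apply ET; auto.
  - rewrite H1. apply ET.
  - apply C4; auto.
  - apply C4; auto.
  - apply C5; auto.
  - apply C7.
  - apply (C9 (E h t) (E h u)); auto.
  - apply (C9 (E h t) (E h u)); auto.
  - apply (C10 (E h t)); auto.
  - apply (C11 (E h t)); auto.
  - apply (C12 (E h t)); auto.
Qed.
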